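(* Let $R$ be a right $\sigma$-reversible ring, where $\sigma$ is an endomorphism of $R$ with $\sigma(1)=1$. Then the set of idempotents of $R[[x;\sigma]]$ coincides with the set of idempotents of $R$ (viewed as constant series), and $R[[x;\sigma]]$ is abelian (all its idempotents are central).
   Context: All rings are associative with identity; $\sigma$ denotes a nonzero, non-identity ring endomorphism of $R$. The skew power series ring $R[[x;\sigma]]$ consists of all formal series $\sum_{i=0}^\infty a_i x^i$ with $a_i\in R$, added termwise and multiplied using distributivity and the rule $xa=\sigma(a)x$ for $a\in R$. $R$ is right $\sigma$-reversible if for all $a,b\in R$, $ab=0$ implies $b\sigma(a)=0$. *)

(* Defs.v *)
From HB Require Import structures.
From mathcomp Require Import all_boot all_order all_algebra.
Set Implicit Arguments. Unset Strict Implicit. Unset Printing Implicit Defensive.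
Import GRing.Theory.
Local Open Scope ring_scope.

(* Formal skew power series sum_i a_i x^i over R, represented by their
   coefficient sequence i |-> a_i. *)
Definition skew_series (R : nzRingType) := nat -> R.

Definition sadd (R : nzRingType) (f g : skew_series R) : skew_series R :=
  fun n => f n + g n.

(* Product in R[[x;sigma]]: (a x^i)(b x^j) = a sigma^i(b) x^(i+j), hence
   (f g)_n = sum_{i+j=n} f_i sigma^i(g_j). *)
Definition smul (R : nzRingType) (sigma : R -> R) (f g : skew_series R)
  : skew_series R :=
  fun n => \sum_(i < n.+1) f i * (iter i sigma) (g (n - i)%N).

Definition sconst (R : nzRingType) (a : R) : skew_series R :=
  fun n => if n == 0%N then a else 0.

Definition right_sigma_reversible (R : nzRingType) (sigma : R -> R) : Prop :=
  forall a b : R, a * b = 0 -> b * sigma a = 0.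

Definition idempotent_R (R : nzRingType) (e : R) : Prop := e * e = e.

Definition idempotent_S (R : nzRingType) (sigma : R -> R) (f : skew_series R)
  : Prop := smul sigma f f = f.

(* Main.v *)
Require Import Defs.
From HB Require Import structures.
From mathcomp Require Import all_boot all_order all_algebra.
From Stdlib Require Import FunctionalExtensionality.
Import GRing.Theory.
Local Open Scope ring_scope.

Section Aux.
Variable R : nzRingType.
Variable sigma : {rmorphism R -> R}.
Hypothesis hrev : right_sigma_reversible sigma.

Lemma idem_fix (e : R) : e * e = e -> sigma e = e.
Proof.
move=> he.
have h1 : e * (1 - e) = 0 by rewrite mulrBr mulr1 he subrr.
have h2 : (1 - e) * e = 0 by rewrite mulrBl mul1r he subrr.
have := hrev _ _ h1; rewrite mulrBl mul1r => /eqP; rewrite subr_eq0 => /eqP H1.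
have := hrev _ _ h2; rewrite rmorphB rmorph1 mulrBr mulr1 => /eqP; rewrite subr_eq0 => /eqP H2.
by rewrite H1 -H2.
Qed.

Lemma idem_central (e : R) : e * e = e -> forall r, e * r = r * e.
Proof.
move=> he r.
have h1 : e * ((1 - e) * r) = 0 by rewrite mulrA mulrBr mulr1 he subrr mul0r.
have h2 : (1 - e) * (e * r) = 0 by rewrite mulrA mulrBl mul1r he subrr mul0r.
have := hrev _ _ h1; rewrite (@idem_fix e he) mulrBl mul1r mulrBl => /eqP; rewrite subr_eq0 => /eqP H1.
have := hrev _ _ h2; rewrite rmorphB rmorph1 (@idem_fix e he) mulrBr mulr1
  => /eqP; rewrite subr_eq0 => /eqP H2.
by rewrite H2 H1.
Qed.

Lemma iter_fix (e : R) i : sigma e = e -> iter i sigma e = e.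
Proof. by move=> h; elim: i => //= i ->. Qed.

Lemma iter0 i : iter i sigma 0 = 0.
Proof. by elim: i => //= i ->; rewrite rmorph0. Qed.

Lemma smul_const_l (e : R) g n : smul sigma (sconst e) g n = e * g n.
Proof.
rewrite /smul big_ord_recl /= subn0 /sconst /= big1 ?addr0 // => i _.
by rewrite mul0r.
Qed.

Lemma smul_const_r (e : R) g n :
  smul sigma g (sconst e) n = g n * iter n sigma e.
Proof.
rewrite /smul big_ord_recr /= subnn /sconst /= big1 ?add0r // => i _.
have : (n - i)%N == 0%N = false by rewrite subn_eq0 leqNgt ltn_ord.
by move=> ->; rewrite iter0 mulr0.
Qed.
End Aux.

Theorem lemma3p2 (R : nzRingType) (sigma : {rmorphism R -> R})
  (sigma_nonid : exists a : R, sigma a <> a)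
  (hrev : right_sigma_reversible sigma) :
  (* idempotents of R[[x;sigma]] = idempotents of R as constant series *)
  (forall f : skew_series R,
     idempotent_S sigma f <-> exists e : R, idempotent_R e /\ f = sconst e) /\
  (* R[[x;sigma]] is abelian: idempotents are central *)
  (forall f g : skew_series R,
     idempotent_S sigma f -> smul sigma f g = smul sigma g f).
Proof.
have key : forall f : skew_series R,
     idempotent_S sigma f <-> exists e : R, idempotent_R e /\ f = sconst e.
  move=> f; split.
  - move=> hf.
    have he : f 0%N * f 0%N = f 0%N.
      by have := congr1 (fun h => h 0%N) hf; rewrite /smul big_ord1 /=.
    have hc := @idem_central R sigma hrev _ he.
    have hfix := @idem_fix R sigma hrev _ he.
    have hz : forall n, f n.+1 = 0.
      elim/ltn_ind => n IH.
      have := congr1 (fun h => h n.+1) hf.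
      rewrite /smul big_ord_recl big_ord_recr /= subn0 subnn big1; last first.
        move=> i _; rewrite /bump /= IH ?mul0r //.
      rewrite /bump /= !add0n add0r -iterS iter_fix // -hc.
      set a := f n.+1 => H.
      have Hea : f 0%N * a = 0.
        have := congr1 (fun x => f 0%N * x) H; rewrite /= mulrDr !mulrA he.
        by move=> /eqP; rewrite -subr_eq0 addrK => /eqP.
      by rewrite -H Hea addr0.
    exists (f 0%N); split => //.
    apply: functional_extensionality => -[|n]; by rewrite /sconst /= ?hz.
  - move=> [e [he ->]]; rewrite /idempotent_S.
    apply: functional_extensionality => n.
    rewrite smul_const_l /sconst; case: (n == 0%N) => //; by rewrite mulr0.
split => // f g /key [e [he ->]].
apply: functional_extensionality => n.
rewrite smul_const_l smul_const_r iter_fix; last exact: (@idem_fix R sigma hrev _ he).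
exact: (@idem_central R sigma hrev _ he).
Qed.
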